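(* Let $S$ be of the form $S_t=\sum_{-r<s\le t}(\Delta L_s)^2$ with $\mathbb E[L_1^4]<\infty$, and let $X$ be the unique solution to $dX_t=(\eta-c_\mu X_t+\xi(X)_t)\,dt+c_\nu X_{t-}\,dS_t$, $t\ge0$, where $\xi(X)_t=\int_{-p}^0 f_\mu(u)X_{t+u}\,du+\int_{-q+}^0 f_\nu(u)X_{t+u-}\,dS_{t+u}$. Suppose $\eta>0$, $c_\mu>\|f_\mu\|_{L^1}$ and $X_u\ge x^-:=\eta/(c_\mu-\|f_\mu\|_{L^1})$ for all $u\in[-r,0]$. Then for each $t>0$, $X_t\ge x^-$ almost surely; in particular $X_t$ is positive and bounded away from zero by $x^-$.
   Context: Let $p,q\ge0$, $r:=p\vee q$, $(\Omega,\mathcal F,\mathbb F=(\mathcal F_t)_{t\ge-r},\mathbb P)$ a filtered probability space with the usual conditions, and $(L_t)_{t\ge-r}$ a càdlàg adapted centered Lévy process with $L_{-r}=0$ and increments independent of the past and stationary. Parameters: $c_\nu>0$, $f_\mu,f_\nu$ nonnegative continuous functions supported on $[-p,0]$ and $[-q,0]$. The initial condition $X=\Phi$ on $[-r,0]$ is a càdlàg process adapted to the natural filtration of $L$ with $\mathbb E[\sup_{[-r,0]}|\Phi|^2]<\infty$; the solution is the unique adapted càdlàg process with $\mathbb E[\sup_{s\in[-r,t]}|X_s|^2]<\infty$ for all $t$. *)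

(* Defs.v *)
From mathcomp Require Import all_boot all_order all_algebra.
From mathcomp Require Import all_classical all_reals all_analysis.
Set Implicit Arguments. Unset Strict Implicit. Unset Printing Implicit Defensive.
Import Order.TTheory GRing.Theory Num.Theory.
Import numFieldNormedType.Exports.
Local Open Scope classical_set_scope.
Local Open Scope ring_scope.

Section defs.
Context {R : realType} {d : measure_display} {T : measurableType d}.

Definition measurable_wrt (G : set (set T)) (f : T -> R) :=
  forall B : set R, measurable B -> G (f @^-1` B).

Definition filtration (r : R) (F : R -> set (set T)) :=
  (forall t, -r <= t -> sigma_algebra setT (F t) /\ F t `<=` measurable) /\
  (forall s t, -r <= s -> s <= t -> F s `<=` F t).

Definition usual_conditions (P : probability T R) (r : R)
    (F : R -> set (set T)) :=
  (forall t, -r <= t -> forall N : set T,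
      (exists M, measurable M /\ P M = 0%E /\ N `<=` M) -> F t N) /\
  (forall t, -r <= t -> F t = \bigcap_(s in `]t, +oo[) F s).

Definition cadlag_on (f : R -> R) (a : R) :=
  forall t, a <= t -> (f x @[x --> t^'+] --> f t) /\
                      (a < t -> cvg (f x @[x --> t^'-])).

Definition left_lim (f : R -> R) (t : R) : R := lim (f x @[x --> t^'-]).

Definition jumpsq (f : R -> R) (t : R) : R := (f t - left_lim f t) ^+ 2.

Definition levy_process (P : probability T R) (r : R)
    (F : R -> set (set T)) (L : R -> T -> R) :=
  (forall w, L (-r) w = 0) /\
  [/\ (forall t, -r <= t -> measurable_wrt (F t) (L t)),
      (forall w, cadlag_on (fun t => L t w) (-r)),
      (forall s t, -r <= s -> s <= t -> forall (A : set T) (B : set R),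
          F s A -> measurable B ->
          P (A `&` ((fun w => L t w - L s w) @^-1` B)) =
          (P A * P ((fun w => (L t w - L s w)%R) @^-1` B))%E),
      (forall s t h, -r <= s -> s <= t -> 0 <= h -> forall B : set R,
          measurable B ->
          P ((fun w => L (t + h) w - L (s + h) w) @^-1` B) =
          P ((fun w => L t w - L s w) @^-1` B)) &
      (forall t, -r <= t -> P.-integrable setT (EFin \o L t) /\
          (\int[P]_w (L t w)%:E = 0)%E)].

Definition natural_filtration (r : R) (L : R -> T -> R) (u : R) : set (set T) :=
  <<s [set A | exists v (B : set R), [/\ -r <= v, v <= u, measurable B &
                                         A = L v @^-1` B]] >>.

Definition Spath (r : R) (Lw : R -> R) (t : R) : \bar R :=
  \esum_(s in `]-r, t]) (jumpsq Lw s)%:E.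

Definition jump_dom (r a b : R) : set R := `]a, b] `&` `]-r, +oo[.

(** Since S is nondecreasing and pure jump with Delta S_s = (Delta L_s)^2,
    its Lebesgue--Stieltjes measure dS is sum_{s > -r} (Delta L_s)^2 delta_s. *)
Definition dS_int (r : R) (Lw : R -> R) (a b : R) (g : R -> R) : R :=
  fine (\esum_(s in jump_dom r a b)
          (Num.max (g s) 0 * jumpsq Lw s)%:E)
  - fine (\esum_(s in jump_dom r a b)
          (Num.max (- g s) 0 * jumpsq Lw s)%:E).

Definition dS_integrable (r : R) (Lw : R -> R) (a b : R) (g : R -> R) :=
  (\esum_(s in jump_dom r a b) (`|g s| * jumpsq Lw s)%:E < +oo)%E.

Definition xi (r p q : R) (fmu fnu : R -> R) (Lw Xw : R -> R) (t : R) : R :=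
  Rintegral lebesgue_measure `[-p, 0] (fun u => fmu u * Xw (t + u))
  + dS_int r Lw (t - q) t (fun s => fnu (s - t) * left_lim Xw s).

Definition solves_path (r p q eta cmu cnu : R) (fmu fnu : R -> R)
    (Lw Xw : R -> R) :=
  forall t, 0 <= t ->
  [/\ (forall s, 0 <= s -> s <= t ->
         lebesgue_measure.-integrable `[-p, 0]
           (EFin \o (fun u => fmu u * Xw (s + u)))),
      (forall s, 0 <= s -> s <= t ->
         dS_integrable r Lw (s - q) s (fun v => fnu (v - s) * left_lim Xw v)),
      lebesgue_measure.-integrable `[0, t]
        (EFin \o (fun s => eta - cmu * Xw s + xi r p q fmu fnu Lw Xw s)),
      dS_integrable r Lw 0 t (left_lim Xw) &
      Xw t = Xw 0
        + Rintegral lebesgue_measure `[0, t]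
            (fun s => eta - cmu * Xw s + xi r p q fmu fnu Lw Xw s)
        + cnu * dS_int r Lw 0 t (left_lim Xw)].

Definition is_solution (P : probability T R) (r : R) (F : R -> set (set T))
    (p q eta cmu cnu : R) (fmu fnu : R -> R) (L X : R -> T -> R) :=
  [/\ (forall t, -r <= t -> measurable_wrt (F t) (X t)),
      (forall w, cadlag_on (fun t => X t w) (-r)),
      (forall t, -r <= t ->
         (\int[P]_w ereal_sup [set ((`|X u w|) ^+ 2)%R%:E | u in `[(-r)%R, t]]
            < +oo)%E) &
      {ae P, forall w, solves_path r p q eta cmu cnu fmu fnu
                         (fun t => L t w) (fun t => X t w)}].

End defs.

(* Main.v *)
Require Import Defs.
From mathcomp Require Import all_boot all_order all_algebra.
From mathcomp Require Import all_classical all_reals all_analysis.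
From mathcomp Require Import ring lra.
Import Order.TTheory GRing.Theory Num.Theory.
Import numFieldNormedType.Exports.
Local Open Scope classical_set_scope.
Local Open Scope ring_scope.

Section helpers.
Context {R : realType}.

Lemma jumpsq_ge0 (f : R -> R) s : 0 <= jumpsq f s.
Proof. exact: sqr_ge0. Qed.

Lemma dS_int_nonneg (r a b : R) (Lw g : R -> R) :
  (forall s, jump_dom r a b s -> 0 <= g s) ->
  dS_int r Lw a b g = fine (\esum_(s in jump_dom r a b) (g s * jumpsq Lw s)%:E).
Proof.
move=> g0; rewrite /dS_int.
rewrite (@esum1 _ _ _ (fun s => (Num.max (- g s) 0 * jumpsq Lw s)%:E)); last first.
  move=> s /g0 gs; rewrite (_ : Num.max _ _ = 0) ?mul0r //.
  by apply/max_idPr; rewrite oppr_le0.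
rewrite /= subr0; congr fine; apply: eq_esum => s /g0 gs.
by rewrite (_ : Num.max (g s) 0 = g s) //; apply/max_idPl.
Qed.

Lemma dS_int_ge0 (r a b : R) (Lw g : R -> R) :
  (forall s, jump_dom r a b s -> 0 <= g s) -> 0 <= dS_int r Lw a b g.
Proof.
move=> g0; rewrite dS_int_nonneg //; apply: fine_ge0; apply: esum_ge0 => s /g0 gs.
by rewrite lee_fin mulr_ge0 // jumpsq_ge0.
Qed.

Lemma jump_dom_sub (r a b b' : R) : b <= b' -> jump_dom r a b `<=` jump_dom r a b'.
Proof.
move=> bb' s [] /=; rewrite !in_itv /= => /andP[ha sb] rs; split => //=.
by rewrite in_itv /= ha (le_trans sb bb').
Qed.

Arguments jump_dom_sub {r a b b'}.

Lemma dS_int_le (r a b b' : R) (Lw g : R -> R) : b <= b' ->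
  (forall s, jump_dom r a b' s -> 0 <= g s) ->
  dS_integrable r Lw a b' g ->
  dS_int r Lw a b g <= dS_int r Lw a b' g.
Proof.
move=> bb' g0 gi.
have g0' : forall s, jump_dom r a b s -> 0 <= g s.
  by move=> s /(jump_dom_sub bb') /g0.
rewrite !dS_int_nonneg //.
have E2 : (\esum_(s in jump_dom r a b') (g s * jumpsq Lw s)%:E < +oo)%E.
  move: gi; rewrite /dS_integrable (@eq_esum _ _ _ _ (fun s => (g s * jumpsq Lw s)%:E)) //.
  by move=> s /g0 gs; rewrite ger0_norm.
have le12 : (\esum_(s in jump_dom r a b) (g s * jumpsq Lw s)%:E <=
            \esum_(s in jump_dom r a b') (g s * jumpsq Lw s)%:E)%E.
  rewrite [X in (X <= _)%E]esum_mkcond [X in (_ <= X)%E]esum_mkcond.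
  apply: le_esum => s _.
  case: ifPn => [/set_mem sb|_]; case: ifPn => [/set_mem sb'|/negP sb'] //.
  - by exfalso; apply: sb'; apply/mem_set; exact: (jump_dom_sub bb').
  - by rewrite lee_fin mulr_ge0 // ?jumpsq_ge0 // g0.
have ge1 : (0 <= \esum_(s in jump_dom r a b) (g s * jumpsq Lw s)%:E)%E.
  by apply: esum_ge0 => s /g0' gs; rewrite lee_fin mulr_ge0 // jumpsq_ge0.
apply: fine_le => //.
  by rewrite ge0_fin_numE // (le_lt_trans le12).
by rewrite ge0_fin_numE // (le_trans ge1).
Qed.

Lemma left_lim_lb (Xw : R -> R) (r c v : R) : cadlag_on Xw (-r) ->
  -r < v -> (forall u, -r <= u -> u < v -> c <= Xw u) -> c <= left_lim Xw v.
Proof.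
move=> cad rv H; rewrite /left_lim; apply: limr_ge.
  by have [_ /(_ rv)] := cad v (ltW rv).
near=> x; apply: H.
  by apply: ltW; near: x; exact: nbhs_left_gt.
by near: x; exact: nbhs_left_lt.
Unshelve. all: by end_near. Qed.
Arguments left_lim_lb {Xw r c v}.


Lemma int_split (D : R -> R) (a b : R) : 0 <= a -> a <= b ->
  lebesgue_measure.-integrable `[0, b] (EFin \o D) ->
  Rintegral lebesgue_measure `[0, b] D =
  Rintegral lebesgue_measure `[0, a] D + Rintegral lebesgue_measure `]a, b] D.
Proof.
move=> a0 ab intD.
rewrite (@itv_bndbnd_setU _ _ _ (BRight a)) ?bnd_simp //.
rewrite Rintegral_setU //=.
  by rewrite -itv_bndbnd_setU ?bnd_simp.
apply/disj_set2P; rewrite -subset0 => z/=; rewrite !in_itv/= => -[/andP[_]].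
by rewrite leNgt => /negbTE ->.
Qed.

Lemma diff_formula (r p q eta cmu cnu : R) (fmu fnu Lw Xw : R -> R) (a b : R) :
  solves_path r p q eta cmu cnu fmu fnu Lw Xw -> 0 <= a -> a <= b ->
  Xw b - Xw a =
  Rintegral lebesgue_measure `]a, b]
     (fun s => eta - cmu * Xw s + xi r p q fmu fnu Lw Xw s)
  + cnu * (dS_int r Lw 0 b (left_lim Xw) - dS_int r Lw 0 a (left_lim Xw)).
Proof.
move=> sol a0 ab.
have [_ _ intb _ eqb] := sol b (le_trans a0 ab).
have [_ _ _ _ eqa] := sol a a0.
rewrite [in LHS]eqb [in LHS]eqa (int_split _ _ _ a0 ab intb); ring.
Qed.

Lemma drift_lb (r p q eta cmu cnu : R) (fmu fnu Lw Xw : R -> R) (c s T : R) :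
  0 <= p -> p <= r -> cadlag_on Xw (-r) ->
  solves_path r p q eta cmu cnu fmu fnu Lw Xw ->
  (forall u, 0 <= fmu u) -> (forall u, 0 <= fnu u) ->
  lebesgue_measure.-integrable `[-p, 0] (EFin \o fmu) ->
  0 <= c -> 0 <= s -> s <= T -> (forall u, -r <= u -> u <= s -> c <= Xw u) ->
  eta - cmu * Xw s + Rintegral lebesgue_measure `[-p, 0] fmu * c <=
  eta - cmu * Xw s + xi r p q fmu fnu Lw Xw s.
Proof.
move=> p0 pr cad sol fmu0 fnu0 intf c0 s0 sT H.
have [intfs _ _ _ _] := sol T (le_trans s0 sT).
have ints := intfs s s0 sT.
rewrite lerD2l /xi -[X in X <= _]addr0; apply: lerD.
  rewrite -RintegralZr //; apply: le_Rintegral => //.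
    have -> : EFin \o (fun u => fmu u * c) = ((EFin \o fmu) \* cst c%:E)%E.
      by apply/funext => u /=; rewrite EFinM.
    exact: integrableZr.
  move=> u; rewrite /= in_itv /= => /andP[h1 h2].
  apply: ler_wpM2l => //; apply: H; lra.
apply: dS_int_ge0 => v [] /=; rewrite !in_itv /= andbT => /andP[h1 h2] h3.
apply: mulr_ge0 => //; apply: (le_trans c0); apply: (left_lim_lb cad) => //.
move=> u h4 h5; apply: H => //; lra.
Qed.


Lemma path_bound (r p q eta cmu cnu : R) (fmu fnu Lw Xw : R -> R) (xm l t0 : R) :
  0 <= p -> p <= r ->
  cadlag_on Xw (-r) -> solves_path r p q eta cmu cnu fmu fnu Lw Xw ->
  (forall u, 0 <= fmu u) -> (forall u, 0 <= fnu u) ->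
  lebesgue_measure.-integrable `[-p, 0] (EFin \o fmu) ->
  Rintegral lebesgue_measure `[-p, 0] fmu < cmu -> 0 < cnu ->
  eta = (cmu - Rintegral lebesgue_measure `[-p, 0] fmu) * xm ->
  (forall u, -r <= u -> u <= 0 -> xm <= Xw u) ->
  0 < l -> l < xm -> 0 < t0 -> l <= Xw t0.
Proof.
move=> p0 pr cad sol fmu0 fnu0 intf Icmu cnu0 etaE init l0 lxm t00.
set I := Rintegral lebesgue_measure `[-p, 0] fmu in Icmu etaE.
have I0 : 0 <= I by apply: Rintegral_ge0 => u _; exact: fmu0.
have r0 : 0 <= r by lra.
set D := fun s => eta - cmu * Xw s + xi r p q fmu fnu Lw Xw s.
set J := fun s => dS_int r Lw 0 s (left_lim Xw).
have diff : forall a b, 0 <= a -> a <= b ->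
    Xw b - Xw a = Rintegral lebesgue_measure `]a, b] D + cnu * (J b - J a).
  by move=> a b a0 ab; exact: diff_formula.
pose A := [set s | (0 <= s <= t0) /\ forall u, 0 <= u -> u <= s -> l <= Xw u].
have A0 : A 0.
  split; first by rewrite lexx ltW.
  by move=> u u0 u0'; apply: (le_trans (ltW lxm)); apply: init => //; lra.
have supA : has_sup A.
  split; first by exists 0.
  by exists t0 => s [/andP[_ ?] _].
set σ := sup A.
have σ0 : 0 <= σ by apply: sup_upper_bound.
have σt : σ <= t0 by apply: ge_sup => [|s [/andP[_ ?] _]] //; exists 0.
have F1 : forall u, -r <= u -> u < σ -> l <= Xw u.
  move=> u ru uσ; case: (leP u 0) => u0.
    by apply: (le_trans (ltW lxm)); apply: init.
  have [e [_ He] ue] := @sup_adherent R A (σ - u) ltac:(by rewrite subr_gt0) supA.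
  rewrite -/σ in ue; apply: He; lra.
have F2 : l <= Xw σ.
  case: (eqVneq σ 0) => [->|σn0].
    by apply: (le_trans (ltW lxm)); apply: init => //; lra.
  have σpos : 0 < σ by rewrite lt_def σn0.
  have [_ _ intσ intJ _] := sol σ σ0.
  have cvgG := parameterized_integral_cvg_at_left σpos intσ.
  rewrite leNgt; apply/negP => Xlt.
  have e0 : 0 < l - Xw σ by rewrite subr_gt0.
  move/cvgrPdist_lt: cvgG => /(_ _ e0) H.
  have : \forall u \near σ^'-, (0 <= u /\ u < σ) /\
     `|parameterized_integral lebesgue_measure 0 σ D -
       parameterized_integral lebesgue_measure 0 u D| < l - Xw σ.
    near=> u; split; last by near: u; exact: H.
    split; last by near: u; exact: nbhs_left_lt.
    by apply: ltW; near: u; exact: nbhs_left_gt.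
  move=> /filter_ex [u [[u0 uσ] Hu]].
  have := diff u σ u0 (ltW uσ).
  have -> : Rintegral lebesgue_measure `]u, σ] D =
      parameterized_integral lebesgue_measure 0 σ D -
      parameterized_integral lebesgue_measure 0 u D.
    by rewrite /parameterized_integral (int_split _ _ _ u0 (ltW uσ) intσ); ring.
  have Jle : J u <= J σ.
    apply: dS_int_le => //; first exact: ltW.
    move=> v [] /=; rewrite !in_itv /= andbT => /andP[h1 h2] h3.
    apply: (le_trans (ltW l0)); apply: (left_lim_lb cad) => //.
    by move=> w h4 h5; apply: F1 => //; lra.
  have Xu := F1 u ltac:(lra) uσ.
  have := ler_norm (- (parameterized_integral lebesgue_measure 0 σ D -
       parameterized_integral lebesgue_measure 0 u D)).
  rewrite normrN.
  have : 0 <= cnu * (J σ - J u) by apply: mulr_ge0; lra.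
  lra.
have F3 : A σ.
  split; first by rewrite σ0 σt.
  move=> u u0 uσ; case: (ltP u σ) => h; first by apply: F1 => //; lra.
  by have -> : u = σ by apply/le_anti; rewrite uσ h.
have σeq : σ = t0.
  apply/le_anti; rewrite σt /= leNgt; apply/negP => σlt.
  pose K := (cmu - I) * (xm - l).
  have K0 : 0 < K by apply: mulr_gt0; lra.
  pose δ := Num.min (l / 2) (K / (2 * (2 * cmu + I))).
  have δ0 : 0 < δ.
    rewrite lt_min; apply/andP; split; first lra.
    by apply: divr_gt0 => //; lra.
  have δl : δ <= l / 2 by rewrite ge_min lexx.
  have δK : δ * (2 * (2 * cmu + I)) <= K.
    have h : δ <= K / (2 * (2 * cmu + I)) by rewrite ge_min lexx orbT.
    by rewrite ler_pdivlMr // in h; lra.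
  have [rc _] := cad σ ltac:(lra).
  move/cvgrPdist_lt: rc => /(_ δ δ0) [e /= e0 He].
  have Hn : forall x, σ < x -> x < σ + e -> `|Xw σ - Xw x| < δ.
    move=> x h1 h2; apply: He => //=.
    by rewrite /ball_ /= ltr0_norm ?subr_lt0 //; lra.
  pose s1 := Num.min (σ + e / 2) t0.
  have s1σ : σ < s1 by rewrite lt_min; apply/andP; split; lra.
  have s1t : s1 <= t0 by rewrite ge_min lexx orbT.
  have s1e : s1 < σ + e.
    have : s1 <= σ + e / 2 by rewrite ge_min lexx.
    lra.
  have Hs1 : forall s, σ < s -> s <= s1 -> l <= Xw s.
    move=> s h1 h2.
    have := Hn s h1 ltac:(lra).
    have := ler_norm (Xw σ - Xw s).
    case: (leP (l + δ) (Xw σ)) => hX; first lra.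
    move=> n1 n2.
    have near1 : forall v, σ < v -> v <= s1 -> l - δ < Xw v < l + 2 * δ.
      move=> v v1 v2; have := Hn v v1 ltac:(lra).
      have := ler_norm (Xw σ - Xw v); have := ler_norm (- (Xw σ - Xw v)).
      rewrite normrN => m1 m2 m3; apply/andP; split; lra.
    have lower : forall u, -r <= u -> u <= s1 -> l - δ <= Xw u.
      move=> u u1 u2; case: (leP u σ) => h.
        case: (ltP u σ) => h'; first by have := F1 u u1 h'; lra.
        have -> : u = σ by apply/le_anti; rewrite h h'.
        by have := F2; lra.
      by have /andP[] := near1 u h u2; lra.
    have Dpos : forall v, (`]σ, s]%classic) v -> 0 <= D v.
      move=> v; rewrite /= in_itv /= => /andP[v1 v2].
      have := @drift_lb r p q eta cmu cnu fmu fnu Lw Xw (l - δ) v t0 p0 pr cad sol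
        fmu0 fnu0 intf ltac:(lra) ltac:(lra) ltac:(lra).
      move=> /(_ ltac:(move=> u u1 u2; apply: lower => //; lra)).
      rewrite -/I => hD.
      have /andP[_ hv] := near1 v v1 ltac:(lra).
      have hc : cmu * Xw v <= cmu * (l + 2 * δ) by apply: ler_wpM2l; lra.
      rewrite /D; rewrite etaE in hD *.
      move: δK K0; rewrite /K; lra.
    have := diff σ s σ0 (ltW h1).
    have := Rintegral_ge0 lebesgue_measure Dpos.
    have [_ _ _ intJs _] := sol s ltac:(lra).
    have Jle : J σ <= J s.
      apply: dS_int_le => //; first exact: ltW.
      move=> v [] /=; rewrite !in_itv /= andbT => /andP[v1 v2] v3.
      have : l - δ <= left_lim Xw v.
        apply: (left_lim_lb cad) => //.
        by move=> w w1 w2; apply: lower => //; lra.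
      lra.
    have : 0 <= cnu * (J s - J σ) by apply: mulr_ge0; lra.
    lra.
  have As1 : A s1.
    split; first by apply/andP; split; lra.
    move=> u u0 u1; case: (leP u σ) => h.
      by have [_ HA] := F3; exact: HA.
    exact: Hs1.
  have := sup_upper_bound supA As1.
  rewrite -/σ; lra.
have [_ HA] := F3; apply: HA; lra.
Unshelve. all: by end_near. Qed.

End helpers.

Theorem theorem4p14 (R : realType) (d : measure_display) (T : measurableType d)
    (P : probability T R) (p q : R) (F : R -> set (set T)) (L X : R -> T -> R)
    (eta cmu cnu : R) (fmu fnu : R -> R) :
  0 <= p -> 0 <= q ->
  filtration (Num.max p q) F ->
  usual_conditions P (Num.max p q) F ->
  levy_process P (Num.max p q) F L ->
  (\int[P]_w ((L 1 w) ^+ 4)%:E < +oo)%E ->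
  0 < cnu ->
  continuous fmu -> continuous fnu ->
  (forall u, 0 <= fmu u) -> (forall u, 0 <= fnu u) ->
  (forall u, ~ (-p <= u <= 0) -> fmu u = 0) ->
  (forall u, ~ (-q <= u <= 0) -> fnu u = 0) ->
  (forall u, - Num.max p q <= u -> u <= 0 ->
     measurable_wrt (natural_filtration (Num.max p q) L u) (X u)) ->
  is_solution P (Num.max p q) F p q eta cmu cnu fmu fnu L X ->
  0 < eta ->
  Rintegral lebesgue_measure `[-p, 0] fmu < cmu ->
  {ae P, forall w, forall u, - Num.max p q <= u -> u <= 0 ->
     eta / (cmu - Rintegral lebesgue_measure `[-p, 0] fmu) <= X u w} ->
  forall t, 0 < t ->
  {ae P, forall w,
     eta / (cmu - Rintegral lebesgue_measure `[-p, 0] fmu) <= X t w}.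
Proof.
move=> p0 q0 _ _ _ _ cnu0 cfmu _ fmu0 fnu0 _ _ _ [_ cad _ aesol] eta0 Icmu aeinit t t0.
set I := Rintegral lebesgue_measure `[-p, 0] fmu in Icmu aeinit *.
have intf : lebesgue_measure.-integrable `[-p, 0] (EFin \o fmu).
  apply: continuous_compact_integrable; first exact: segment_compact.
  exact: continuous_subspaceT.
have pm : p <= Num.max p q by rewrite le_max lexx.
set xm := eta / (cmu - I) in aeinit *.
have IP : 0 < cmu - I by rewrite subr_gt0.
have xm0 : 0 < xm by apply: divr_gt0.
have etaE : eta = (cmu - I) * xm by rewrite /xm mulrC divfK // gt_eqF.
apply: filterS2 aesol aeinit => w sol init.
have H : forall l, 0 < l -> l < xm -> l <= X t w.
  move=> l l0 lxm.
  exact: (@path_bound R (Num.max p q) p q eta cmu cnu fmu fnu (fun s => L s w)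
    (fun s => X s w) xm l t p0 pm (cad w) sol fmu0 fnu0 intf Icmu cnu0 etaE init l0 lxm t0).
rewrite leNgt; apply/negP => yx.
case: (leP (X t w) 0) => y0.
  have := H (xm / 2) ltac:(lra) ltac:(lra); lra.
have := H ((X t w + xm) / 2) ltac:(lra) ltac:(lra); lra.
Qed.
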